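(* Let $\mathfrak g$ be a finite-dimensional complex simple Lie algebra with Cartan subalgebra $\mathfrak t$ and root system $\Phi_{\mathfrak g}$. Let $Q=\sum_{i=1}^pA_ix^i$ with $p\ge1$, $A_i\in\mathfrak t$, $A_p\ne0$; for $\alpha\in\Phi_{\mathfrak g}$ let $d_\alpha=\deg_x\bigl(\sum_i\alpha(A_i)x^i\bigr)$ (with $\deg_x(0)=0$) and for $i\in\{1,\dots,p\}$ let $$\mathbf B_i=\bigcap_{\alpha:\ d_\alpha<i}\operatorname{Ker}(\alpha)\cap\bigcap_{\alpha:\ d_\alpha=i}\bigl(\mathfrak t\setminus\operatorname{Ker}(\alpha)\bigr)\subset\mathfrak t,$$ so that $A_i\in\mathbf B_i$ and the pure local wild mapping class group satisfies $\Gamma_Q\simeq\prod_{i=1}^p\pi_1(\mathbf B_i,A_i)$. Then the number of indices $i\in\{1,\dots,p\}$ for which $\pi_1(\mathbf B_i,A_i)$ is nontrivial is at most $\operatorname{rk}(\mathfrak g)$.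
   Context: $\Gamma_Q=\pi_1(\mathbf B_Q,(A_1,\dots,A_p))$ where $\mathbf B_Q=\{(A_1',\dots,A_p')\in\mathfrak t^p:\deg_x(\sum_i\alpha(A_i')x^i)=d_\alpha\ \forall\alpha\in\Phi_{\mathfrak g}\}$; one has $\mathbf B_Q=\prod_i\mathbf B_i$. $\operatorname{rk}(\mathfrak g)=\dim\mathfrak t$. *)

(* Defs.v *)
From HB Require Import structures.
From mathcomp Require Import all_boot all_order all_algebra.
From mathcomp Require Import all_classical all_reals all_analysis.
From mathcomp Require Import complex.
Import Order.TTheory GRing.Theory Num.Theory ComplexField.

Set Implicit Arguments.
Unset Strict Implicit.
Unset Printing Implicit Defensive.

Local Open Scope ring_scope.

(* The complex numbers R[i] (R a realType) carry their norm topology;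
   hence 'rV[R[i]]_n = C^n gets the product topology. *)
HB.instance Definition _ (R : rcfType) :=
  PseudoPointedMetric.copy R[i] (R[i])^o.

Section LieDefs.
Variables (R : realType) (n : nat).
Local Notation C := (R[i]).
Local Notation V := ('rV[C]_n).

Definition is_lie_bracket (br : V -> V -> V) : Prop :=
  [/\ (forall (a : C) (x y z : V), br (a *: x + y) z = a *: br x z + br y z),
      (forall (a : C) (x y z : V), br z (a *: x + y) = a *: br z x + br z y),
      (forall x : V, br x x = 0) &
      (forall x y z : V, br x (br y z) + br y (br z x) + br z (br x y) = 0)].

(* Ideals are represented by (the row space of) square matrices. *)
Definition lie_ideal (br : V -> V -> V) (I : 'M[C]_n) : Prop :=
  forall x y : V, (y <= I)%MS -> (br x y <= I)%MS.

Definition is_simple_lie (br : V -> V -> V) : Prop :=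
  [/\ is_lie_bracket br,
      (exists x y : V, br x y != 0) &
      (forall I : 'M[C]_n, lie_ideal br I -> \rank I = 0%N \/ \rank I = n)].

Definition is_cartan (br : V -> V -> V) (T : 'M[C]_n) : Prop :=
  [/\ (forall x y : V, (x <= T)%MS -> (y <= T)%MS -> (br x y <= T)%MS),
      (exists k : nat, forall (s : seq V) (y : V), size s = k ->
          all (fun x => (x <= T)%MS) s -> (y <= T)%MS -> foldr br y s = 0) &
      (forall x : V, (forall h : V, (h <= T)%MS -> (br x h <= T)%MS) ->
          (x <= T)%MS)].

Definition lfun (a : 'cV[C]_n) (h : V) : C := (h *m a) 0 0.

(* a represents a root (its restriction to t is a root): nonzero on t and
   with a nonzero root space. *)
Definition is_root (br : V -> V -> V) (T : 'M[C]_n) (a : 'cV[C]_n) : Prop :=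
  (exists h : V, (h <= T)%MS /\ lfun a h != 0) /\
  (exists x : V, x != 0 /\
     forall h : V, (h <= T)%MS -> br h x = lfun a h *: x).

(* d_alpha = deg_x (sum_{i=1}^p alpha(A_i) x^i), with deg 0 = 0. *)
Definition d_root (p : nat) (A : nat -> V) (a : 'cV[C]_n) : nat :=
  (size (\poly_(i < p.+1) (if i == 0%N then 0 else lfun a (A i)))).-1.

Definition Bset (br : V -> V -> V) (T : 'M[C]_n) (p : nat) (A : nat -> V)
    (i : nat) : set V :=
  [set h | [/\ (h <= T)%MS,
    (forall a, is_root br T a -> (d_root p A a < i)%N -> lfun a h = 0) &
    (forall a, is_root br T a -> d_root p A a = i -> lfun a h != 0)]].

Local Open Scope classical_set_scope.

Definition pi1_nontrivial (B : set V) (x0 : V) : Prop :=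
  exists g : R -> V,
    [/\ {within `[0, 1], continuous g}, g @` `[0, 1] `<=` B,
        g 0 = x0, g 1 = x0 &
        ~ exists H : R * R -> V,
            [/\ {within `[0, 1] `*` `[0, 1], continuous H},
                H @` (`[0, 1] `*` `[0, 1]) `<=` B,
                (forall s : R, 0 <= s <= 1 -> H (s, 0) = g s /\ H (s, 1) = x0) &
                (forall t : R, 0 <= t <= 1 -> H (0, t) = x0 /\ H (1, t) = x0)]].

End LieDefs.

(* Main.v *)
Require Import Defs.
From HB Require Import structures.
From mathcomp Require Import all_boot all_order all_algebra.
From mathcomp Require Import all_classical all_reals all_analysis.
From mathcomp Require Import complex.
Import Order.TTheory GRing.Theory Num.Theory ComplexField.
Import numFieldNormedType.Exports.
Local Open Scope ring_scope.
Local Open Scope classical_set_scope.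

Lemma normC_real (R : realType) (x : R) : `|(x%:C)%C| = (`|x|%:C)%C :> R[i].
Proof. by rewrite normc_def /= expr0n addr0 sqrtr_sqr. Qed.

Lemma cont_RC (R : realType) : continuous (fun t : R => (t%:C)%C : (R[i])^o).
Proof.
move=> x; apply/cvgrPdist_lt => e e0.
move: e0; rewrite ltcE /= => /andP[/eqP He e'0].
have -> : e = ((complex.Re e)%:C)%C by case: e He {e'0} => a b /= ->.
near=> y.
rewrite -rmorphB normC_real ltcR.
near: y.
rewrite near_simpl. by apply: (@cvgr_dist_lt _ _ _ _ _ id).
Unshelve. all: end_near.
Qed.

Lemma contract (R : realType) (n : nat) (B : set 'rV[R[i]]_n) (g : R -> 'rV[R[i]]_n) x0 :
  (forall u v (c : R[i]), B u -> B v -> B (u + c *: (v - u))) ->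
  {within `[0, 1], continuous g} -> g @` `[0, 1] `<=` B -> g 0 = x0 -> g 1 = x0 ->
  exists H : R * R -> 'rV[R[i]]_n,
            [/\ {within `[0, 1] `*` `[0, 1], continuous H},
                H @` (`[0, 1] `*` `[0, 1]) `<=` B,
                (forall s : R, 0 <= s <= 1 -> H (s, 0) = g s /\ H (s, 1) = x0) &
                (forall t : R, 0 <= t <= 1 -> H (0, t) = x0 /\ H (1, t) = x0)].
Proof.
move=> Bc gc gB g0 g1.
exists (fun st => g st.1 + ((st.2)%:C)%C *: (x0 - g st.1)); split.
- apply/subspace_continuousP => -[s t] /= [Is It].
  have G1 : (fun st : R * R => g st.1) @ within (`[0, 1] `*` `[0, 1]) (nbhs (s, t)) --> g s.
    apply: cvg_trans ((proj1 (subspace_continuousP _ _) gc) s Is).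

    move=> P; rewrite !nbhs_simpl /= => hP.
    have := @cvg_fst _ _ (nbhs s) (nbhs t) _ _ hP.
    move=> /(_ _) h2; move: h2; rewrite nbhs_simpl /= => h2.
    rewrite /within; move: h2; rewrite nbhs_simpl.
    apply: filterS => -[y1 y2] /= h3 [Iy1 _].
    exact: (h3 Iy1).
  have G2 : (fun st : R * R => ((st.2)%:C)%C : (R[i])^o) @ within (`[0, 1] `*` `[0, 1]) (nbhs (s, t)) --> (t%:C)%C.
    apply: cvg_within_filter.
    apply: (@cvg_comp _ _ _ (fun st : R * R => st.2) (fun x : R => (x%:C)%C : (R[i])^o) _ (nbhs t)).
      exact: (@cvg_snd _ _ (nbhs s) (nbhs t) _).
    exact: cont_RC.
  apply: (@cvgD _ ('rV[(R[i])^o]_n)); first exact: G1.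
  apply: (@cvgZ _ ('rV[(R[i])^o]_n)); first exact: G2.
  apply: (@cvgB _ ('rV[(R[i])^o]_n)); last exact: G1.
  exact: cvg_cst.
- have Bx0 : B x0 by rewrite -g0; apply: gB; exists 0 => //; rewrite /= in_itv /= lexx ler01.
  move=> _ [[s t] [/= Is It] <-]; apply: Bc => //.
  by apply: gB; exists s.
- move=> s _; split; first by rewrite /= scale0r addr0.
  by rewrite /= scale1r addrC subrK.
- move=> t _; rewrite /= g0 g1 subrr scaler0 addr0; split => //.
Qed.

Section Alg.
Variables (R : realType) (n : nat).
Local Notation V := 'rV[R[i]]_n.

Lemma lfun_lin (a : 'cV[R[i]]_n) (u v : V) (c : R[i]) :
  lfun a (u + c *: v) = lfun a u + c * lfun a v.
Proof. by rewrite /lfun mulmxDl -scalemxAl !mxE. Qed.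

Lemma lfun_sum (a : 'cV[R[i]]_n) m (c : 'I_m -> R[i]) (x : 'I_m -> V) :
  lfun a (\sum_k c k *: x k) = \sum_k c k * lfun a (x k).
Proof.
rewrite /lfun mulmx_suml summxE; apply: eq_bigr => k _.
by rewrite -scalemxAl mxE.
Qed.

Lemma dfact (p : nat) (A : nat -> V) a m :
  d_root p A a = m -> (0 < m)%N ->
  lfun a (A m) != 0 /\ forall j, (m < j <= p)%N -> lfun a (A j) = 0.
Proof.
rewrite /d_root; set P := \poly_(_ < _) _ => hd m0.
have szP : size P = m.+1.
  by move: hd m0; case: (size P) => [|k] /= <-.
have szle : (size P <= p.+1)%N := size_poly _ _.
split.
- have : P`_m != 0.
    have := lead_coefE P; rewrite szP /= => <-.
    by rewrite lead_coef_eq0 -size_poly_eq0 szP.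
  have mp : (m < p.+1)%N by rewrite -szP.
  rewrite coef_poly mp.
  have mn0 : (m == 0%N) = false by apply/negbTE; rewrite -lt0n.
  by rewrite mn0.
- move=> j /andP[mj jp].
  have : P`_j = 0 by apply: nth_default; rewrite szP.
  rewrite coef_poly ltnS jp.
  have jn0 : (j == 0%N) = false by apply/negbTE; rewrite -lt0n (leq_ltn_trans _ mj).
  by rewrite jn0.
Qed.

End Alg.
Local Close Scope classical_set_scope.

Theorem corollary5p6 (R : realType) (n : nat)
    (br : 'rV[R[i]]_n -> 'rV[R[i]]_n -> 'rV[R[i]]_n) (T : 'M[R[i]]_n)
    (p : nat) (A : nat -> 'rV[R[i]]_n) :
  is_simple_lie br -> is_cartan br T ->
  (1 <= p)%N ->
  (forall i, (1 <= i <= p)%N -> (A i <= T)%MS) ->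
  A p != 0 ->
  (#|[set i : 'I_p.+1 |
       (0 < i)%N && `[< pi1_nontrivial (Bset br T p A i) (A i) >]]|
     <= \rank T)%N.
Proof.
move=> _ _ _ AT _.
set S := [set i : 'I_p.+1 | _].
have key : forall i : 'I_p.+1, i \in S ->
    exists a, is_root br T a /\ d_root p A a = i.
  move=> i; rewrite inE => /andP[i0 /asboolP [g [gc gB g0 g1 nH]]].
  apply: contrapT => hno; apply: nH; apply: contract => //.
  move=> u v c [uT u1 u2] [vT v1 v2]; split.
  - have -> : u + c *: (v - u) = (1 - c) *: u + c *: v.
      by rewrite scalerBr scalerBl scale1r addrCA addrC.
    by rewrite addmx_sub // scalemx_sub.
  - move=> a ra da.
    have := u1 a ra da; have := v1 a ra da.
    rewrite /lfun mulmxDl -scalemxAl mulmxBl !mxE => -> ->.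
    by rewrite subrr mulr0 addr0.
  - move=> a ra da; exfalso; apply: hno; by exists a.
have hch : forall i : 'I_p.+1, exists a : 'cV[R[i]]_n, i \in S ->
    is_root br T a /\ d_root p A a = i.
  move=> i; case: (boolP (i \in S)) => iS.
    by have [a ha] := key i iS; exists a.
  by exists 0.
have [al hal] := choice hch.
pose M := \matrix_(k < #|S|) A (enum_val k).
have MT : (M <= T)%MS.
  apply/row_subP => k; rewrite rowK; apply: AT.
  by have := enum_valP k; rewrite inE => /andP[-> _]; rewrite -ltnS ltn_ord.
have fr : row_free M.
  apply/inj_row_free => v vM0.
  apply/rowP => k0; rewrite !mxE; apply/eqP; apply: contraT => nz.
  case: (@arg_minnP _ k0 (fun k => v 0 k != 0) (fun k => val (enum_val k)) nz).
  move=> k1 nz1 min1.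
  set m := enum_val k1 in min1 *.
  have [ra dm] := hal m (enum_valP k1).
  have m0 : (0 < m)%N by have := enum_valP k1; rewrite inE => /andP[].
  have [nzA zA] := @dfact _ _ _ _ _ _ dm m0.
  have := congr1 (lfun (al m)) vM0.
  rewrite mulmx_sum_row.
  under eq_bigr do rewrite rowK.
  rewrite lfun_sum (bigD1 k1) //= big1 ?addr0 => [|k kk1].
    rewrite {2}/lfun mul0mx mxE => /eqP.
    by rewrite mulf_eq0 (negbTE nz1) (negbTE nzA).
  case: (eqVneq (v 0 k) 0) => [->|nzk]; first by rewrite mul0r.
  have le1 := min1 k nzk.
  have ne : enum_val k != m.
    by apply: contra kk1 => /eqP /enum_val_inj ->.
  have lt1 : (m < enum_val k)%N.
    by rewrite ltn_neqAle le1 andbT; rewrite eq_sym.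
  by rewrite zA ?mulr0 // lt1 -ltnS ltn_ord.
have := mxrankS MT.
by rewrite (eqP fr).
Qed.
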